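(* Let $n,d$ be positive integers and let $T=(T_1,\ldots,T_d)$ be a commuting contractive operator-valued multishift on $\ell^2_{\mathbb C^n}(\mathbb N^d)$ whose operator weights are invertible $n\times n$ diagonal matrices. Then $T$ satisfies the von Neumann's inequality, i.e. $\|p(T)\|\le\sup_{z\in\mathbb D^d}|p(z)|$ for every polynomial $p\in\mathbb C[z_1,\ldots,z_d]$.
   Context: $\mathbb N$ denotes the nonnegative integers; $\varepsilon_j\in\mathbb N^d$ has $1$ in the $j$-th place and $0$ elsewhere; $\mathbb D^d$ is the open unit polydisc. $\ell^2_{H}(\mathbb N^d)=\bigoplus_{\alpha\in\mathbb N^d}H$. Given bounded operators $A^{(j)}_\alpha:H\to H$ ($\alpha\in\mathbb N^d$, $j=1,\ldots,d$), the operator-valued multishift with these operator weights is the $d$-tuple defined by $T_j(\oplus_\alpha x_\alpha)=\oplus_\alpha A^{(j)}_{\alpha-\varepsilon_j}x_{\alpha-\varepsilon_j}$ (the term being $0$ when $\alpha_j=0$). It is a commuting operator-valued multishift if $\sup_\alpha\|A^{(j)}_\alpha\|<\infty$ for each $j$ and $A^{(i)}_{\alpha+\varepsilon_j}A^{(j)}_\alpha=A^{(j)}_{\alpha+\varepsilon_i}A^{(i)}_\alpha$ for all $\alpha$ and all $i,j$. It is contractive if each $T_j$ has norm at most $1$. For $p(z)=\sum a_\alpha z^\alpha$, $p(T)=\sum a_\alpha T_1^{\alpha_1}\cdots T_d^{\alpha_d}$. *)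

(* Defs.v *)
From HB Require Import structures.
From mathcomp Require Import all_boot all_order all_algebra.
From mathcomp Require Import all_classical all_reals all_analysis.
From mathcomp Require Import complex.
From mathcomp Require mpoly.

Set Implicit Arguments.
Unset Strict Implicit.
Unset Printing Implicit Defensive.
Import Order.TTheory GRing.Theory Num.Theory.
Local Open Scope ring_scope.

Definition mindex (d : nat) := {ffun 'I_d -> nat}.

(* alpha + eps_j and alpha - eps_j (the latter only used when alpha_j > 0) *)
Definition addeps (d : nat) (a : mindex d) (j : 'I_d) : mindex d :=
  [ffun k => (a k + (k == j))%N].
Definition subeps (d : nat) (a : mindex d) (j : 'I_d) : mindex d :=
  [ffun k => (a k - (k == j))%N].

Definition cabs (R : realType) (z : R[i]) : R := Normc.normc z.

Definition vnorm2 (R : realType) (n : nat) (v : 'cV[R[i]]_n) : R :=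
  \sum_(k < n) cabs (v k ord0) ^+ 2.

(* squared norm on l^2_{C^n}(N^d) (possibly +oo for sequences outside l^2) *)
Definition l2norm2 (R : realType) (d n : nat) (x : mindex d -> 'cV[R[i]]_n) : \bar R :=
  (\esum_(a in [set: mindex d]) (vnorm2 (x a))%:E)%E.

Definition mshift (R : realType) (d n : nat) (A : 'I_d -> mindex d -> 'M[R[i]]_n)
  (j : 'I_d) (x : mindex d -> 'cV[R[i]]_n) : mindex d -> 'cV[R[i]]_n :=
  fun a => if a j == 0%N then 0 else A j (subeps a j) *m x (subeps a j).

Definition mshift_mono (R : realType) (d n : nat) (A : 'I_d -> mindex d -> 'M[R[i]]_n)
  (m : 'I_d -> nat) (x : mindex d -> 'cV[R[i]]_n) : mindex d -> 'cV[R[i]]_n :=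
  foldr (fun j y => iter (m j) (mshift A j) y) x (enum 'I_d).

Definition polyT (R : realType) (d n : nat) (A : 'I_d -> mindex d -> 'M[R[i]]_n)
  (p : mpoly.mpoly d R[i]) (x : mindex d -> 'cV[R[i]]_n) : mindex d -> 'cV[R[i]]_n :=
  fun a => \sum_(m <- mpoly.msupp p)
             mpoly.mcoeff m p *: mshift_mono A (mpoly.fun_of_multinom m) x a.

(* Main.v *)
Require Import Defs.
From HB Require Import structures.
From mathcomp Require Import all_boot all_order all_algebra.
From mathcomp Require Import all_classical all_reals all_analysis.
From mathcomp Require Import complex.
From mathcomp Require mpoly cyclic cyclotomic separable.
From mathcomp Require Import ring lra zify.
Import Order.TTheory GRing.Theory Num.Theory.
Local Open Scope ring_scope.

Set Implicit Arguments.
Unset Strict Implicit.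
Unset Printing Implicit Defensive.
Lemma sum_le_sub (T : eqType) (R : numDomainType) (s1 s2 : seq T) (f : T -> R) :
  uniq s1 -> uniq s2 -> {subset s1 <= s2} -> (forall x, x \in s2 -> 0 <= f x) ->
  \sum_(x <- s1) f x <= \sum_(x <- s2) f x.
Proof.
move=> u1 u2 sub f0.
rewrite [leRHS](bigID (fun x => x \in s1)) /=.
have -> : \sum_(x <- s2 | x \in s1) f x = \sum_(x <- s1) f x.
  rewrite -big_filter; apply: perm_big; apply: uniq_perm.
  - exact: filter_uniq.
  - exact: u1.
  - by move=> x; rewrite mem_filter; case: (boolP (x \in s1)) => // /sub ->.
rewrite lerDl big_seq_cond; apply: sumr_ge0 => x /andP[xs _]; exact: f0.
Qed.

Lemma sum_reindex (T1 T2 : eqType) (V : nmodType) (s1 : seq T1) (s2 : seq T2)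
    (phi : T1 -> T2) (G : T2 -> V) :
  uniq s1 -> uniq s2 -> {in s1 &, injective phi} -> {in s1, forall b, phi b \in s2} ->
  (forall a, a \in s2 -> a \notin map phi s1 -> G a = 0) ->
  \sum_(a <- s2) G a = \sum_(b <- s1) G (phi b).
Proof.
move=> u1 u2 inj sub supp.
rewrite -(big_map phi predT G).
rewrite (bigID (fun a => a \in map phi s1)) /=.
have -> : \sum_(i <- s2 | i \notin [seq phi i | i <- s1]) G i = 0.
  rewrite big_seq_cond; apply: big1 => a /andP[as2 na]; exact: supp.
rewrite addr0.
rewrite -big_filter; apply: perm_big; apply: uniq_perm.
- exact: filter_uniq.
- by rewrite map_inj_in_uniq.
- move=> a; rewrite mem_filter; case: (boolP (a \in map phi s1)) => //= /mapP[b bs ->].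
  by rewrite sub.
Qed.

Lemma count_rm (T : eqType) (P : pred T) (s : seq T) (x : T) :
  uniq s -> x \in s -> P x -> (count (fun y => P y && (y != x)) s).+1 = count P s.
Proof.
elim: s => [//|y s IH] /= /andP[ys us]; rewrite in_cons.
case: (eqVneq x y) ys => [-> ys _ Py|nxy ys /= xs Px].
  rewrite Py andbF /= add0n add1n; congr _.+1.
  apply: eq_in_count => z zs /=.
  have -> : (z != y) by apply: contraNneq ys => <-.
  by rewrite andbT.
by rewrite andbT -(IH us xs Px) addnS.
Qed.

Lemma seq_min (T : eqType) (R : realDomainType) (s : seq T) (f : T -> R) :
  s != [::] -> exists2 x, x \in s & forall y, y \in s -> f x <= f y.
Proof.
elim: s => [//|y s IH] _.
case: (eqVneq s [::]) => [->|sn].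
  by exists y; rewrite ?mem_seq1 // => z; rewrite mem_seq1 => /eqP ->.
have [x xs xm] := IH sn.
case: (lerP (f y) (f x)) => [yx|xy].
  exists y; first by rewrite mem_head.
  move=> z; rewrite in_cons => /orP[/eqP ->//|/xm]; exact: le_trans.
exists x; first by rewrite in_cons xs orbT.
move=> z; rewrite in_cons => /orP[/eqP ->|/xm//]; exact: ltW.
Qed.

Section Box.
Variable d : nat.
Implicit Types a b : mindex d.

Definition le_mi (b a : mindex d) : bool := [forall j, b j <= a j]%N.
Definition subm (a m : mindex d) : mindex d := [ffun j => a j - m j]%N.
Definition addm (a m : mindex d) : mindex d := [ffun j => a j + m j]%N.
Definition msum (a : mindex d) : nat := (\sum_(j < d) a j)%N.

Definition boxs (N : nat) : seq (mindex d) :=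
  [seq ([ffun j => nat_of_ord (f j)] : mindex d) | f : {ffun 'I_d -> 'I_N} <- enum {ffun 'I_d -> 'I_N}].

Lemma mem_boxs N a : (a \in boxs N) = [forall j, a j < N]%N.
Proof.
apply/mapP/forallP => [[f _ ->] j|H].
  by rewrite ffunE ltn_ord.
exists [ffun j => Ordinal (H j)]; first by rewrite mem_enum.
by apply/ffunP => j; rewrite !ffunE.
Qed.

Lemma boxs_uniq N : uniq (boxs N).
Proof.
rewrite map_inj_uniq ?enum_uniq // => f g /ffunP H.
apply/ffunP => j; apply: val_inj; have := H j; rewrite !ffunE; done.
Qed.

Lemma boxs_down N a b : le_mi b a -> a \in boxs N -> b \in boxs N.
Proof.
move=> /forallP ba; rewrite !mem_boxs => /forallP aN; apply/forallP => j.
exact: leq_ltn_trans (ba j) (aN j).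
Qed.

Lemma boxs_sub N K : (N <= K)%N -> {subset boxs N <= boxs K}.
Proof.
move=> NK a; rewrite !mem_boxs => /forallP aN; apply/forallP => j.
exact: leq_trans (aN j) NK.
Qed.

Lemma le_mi_subm a m : le_mi (subm a m) a.
Proof. by apply/forallP => j; rewrite ffunE leq_subr. Qed.

Lemma le_mi_trans a b c : le_mi a b -> le_mi b c -> le_mi a c.
Proof.
move=> /forallP ab /forallP bc; apply/forallP => j; exact: leq_trans (ab j) (bc j).
Qed.

Lemma addmK a m : subm (addm a m) m = a.
Proof. by apply/ffunP => j; rewrite !ffunE addnK. Qed.

Lemma submK a m : le_mi m a -> addm (subm a m) m = a.
Proof. by move=> /forallP ma; apply/ffunP => j; rewrite !ffunE subnK. Qed.

Lemma le_mi_addm a m : le_mi m (addm a m).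
Proof. by apply/forallP => j; rewrite ffunE leq_addl. Qed.

Lemma addm_inj m : injective (addm ^~ m).
Proof. by move=> a b /(congr1 (subm ^~ m)); rewrite !addmK. Qed.

Lemma msum_le_box N a : a \in boxs N -> (msum a <= d * N)%N.
Proof.
rewrite mem_boxs => /forallP aN.
rewrite /msum -[X in (_ <= X * _)%N]card_ord -sum_nat_const.
by apply: leq_sum => j _; apply: ltnW.
Qed.

End Box.
(* ---------- Parseval on roots of unity ---------- *)
Section Parseval.
Variable R : realType.
Local Notation C := R[i].
Variable d K : nat.
Variable w0 : C.
Hypothesis K0 : (0 < K)%N.
Hypothesis w0K : w0 ^+ K = 1.
Hypothesis w0e : forall e, (0 < e < K)%N -> w0 ^+ e != 1.

Definition mon (z : 'I_d -> C) (a : mindex d) : C := \prod_(j < d) z j ^+ a j.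
Definition zeta (k : {ffun 'I_d -> 'I_K}) : 'I_d -> C := fun j => w0 ^+ k j.

Lemma w0_conj : w0 * w0^* = 1.
Proof.
rewrite -normCK.
have : `|w0| ^+ K = 1 by rewrite -normrX w0K normr1.
by move/eqP; rewrite pexpr_eq1 ?normr_ge0 // => /eqP ->; rewrite expr1n.
Qed.

Lemma normw0 : `|w0| = 1.
Proof.
have : `|w0| ^+ K = 1 by rewrite -normrX w0K normr1.
by move/eqP; rewrite pexpr_eq1 ?normr_ge0 // => /eqP.
Qed.

Lemma geo0 (rho : C) : rho ^+ K = 1 -> rho != 1 -> \sum_(t < K) rho ^+ t = 0.
Proof.
move=> h1 h2; have := subrX1 rho K; rewrite h1 subrr => /esym /eqP.
by rewrite mulf_eq0 subr_eq0 (negbTE h2) /= => /eqP.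
Qed.

Lemma inner (x y : nat) : (x < K)%N -> (y < K)%N ->
  \sum_(t < K) (w0 ^+ t) ^+ x * ((w0 ^+ t) ^+ y)^* = if x == y then K%:R else 0.
Proof.
move=> xK yK.
have cE (t m : nat) : ((w0 ^+ t) ^+ m)^* = (w0^*) ^+ (t * m).
  by rewrite exprM rmorphXn rmorphXn.
have wE (t m : nat) : (w0 ^+ t) ^+ m = w0 ^+ (t * m) by rewrite exprM.
case: (ltngtP x y) => [xy|yx|<-].
- rewrite -(subnKC (ltnW xy)).
  set e := (y - x)%N.
  have -> : \sum_(t < K) (w0 ^+ t) ^+ x * ((w0 ^+ t) ^+ (x + e))^*
          = (\sum_(t < K) (w0 ^+ e) ^+ t)^*.
    rewrite rmorph_sum; apply: eq_bigr => t _.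
    rewrite cE wE mulnDr exprD mulrA -exprMn w0_conj expr1n mul1r.
    by rewrite rmorphXn rmorphXn -!exprM mulnC.
  rewrite geo0 ?rmorph0 //.
    by rewrite -exprM mulnC exprM w0K expr1n.
  apply: w0e; rewrite subn_gt0 xy /=.
  by apply: leq_ltn_trans (leq_subr _ _) yK.
- rewrite -(subnKC (ltnW yx)).
  set e := (x - y)%N.
  have -> : \sum_(t < K) (w0 ^+ t) ^+ (y + e) * ((w0 ^+ t) ^+ y)^*
          = \sum_(t < K) (w0 ^+ e) ^+ t.
    apply: eq_bigr => t _.
    rewrite cE wE mulnDr exprD mulrAC -exprMn w0_conj expr1n mul1r.
    by rewrite -!exprM mulnC.
  rewrite geo0 //.
    by rewrite -exprM mulnC exprM w0K expr1n.
  apply: w0e; rewrite subn_gt0 yx /=.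
  by apply: leq_ltn_trans (leq_subr _ _) xK.
- idtac.
  under eq_bigr do rewrite cE wE -exprMn w0_conj expr1n.
  by rewrite sumr_const card_ord.
Qed.

Lemma parseval (w : mindex d -> C) :
  \sum_(k : {ffun 'I_d -> 'I_K}) `|\sum_(a <- boxs d K) w a * mon (zeta k) a| ^+ 2
  = (K ^ d)%:R * \sum_(a <- boxs d K) `|w a| ^+ 2.
Proof.
under eq_bigr do rewrite normCK rmorph_sum big_distrlr /=.
rewrite exchange_big /=.
rewrite mulr_sumr; apply: eq_big_seq => a aB.
rewrite exchange_big /=.
have inn (b : mindex d) : b \in boxs d K ->
    \sum_(k : {ffun 'I_d -> 'I_K}) (w a * mon (zeta k) a) * (w b * mon (zeta k) b)^*
    = if b == a then (K ^ d)%:R * (w a * (w a)^*) else 0.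
  move=> bB.
  have -> : \sum_(k : {ffun 'I_d -> 'I_K}) (w a * mon (zeta k) a) * (w b * mon (zeta k) b)^*
      = (w a * (w b)^*) * \prod_(j < d) \sum_(t < K) (w0 ^+ t) ^+ (a j) * ((w0 ^+ t) ^+ (b j))^*.
    rewrite bigA_distr_bigA mulr_sumr; apply: eq_bigr => k _.
    rewrite /mon /zeta rmorphM rmorph_prod mulrACA; congr (_ * _).
    by rewrite big_split.
  move: aB bB; rewrite !mem_boxs => /forallP aB /forallP bB.
  under eq_bigr do rewrite inner ?aB ?bB //.
  case: (eqVneq b a) => [->|nba].
    rewrite (eq_bigr (fun _ => K%:R)); last by move=> j _; rewrite eqxx.
    by rewrite prodr_const card_ord natrX mulrC.
  have [j nj] : exists j, b j != a j.
    apply/existsP; apply: contraNT nba => /existsPn H.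
    by apply/eqP/ffunP => j; apply/eqP; move: (H j); rewrite negbK.
  by rewrite (bigD1 j) //= eq_sym (negbTE nj) mul0r mulr0.
rewrite big_seq (eq_bigr (fun b => if b == a then (K ^ d)%:R * (w a * (w a)^*) else 0));
  last by move=> b bB; rewrite inn.
rewrite -big_seq -big_mkcond /=.
rewrite -big_filter.
have -> : [seq b <- boxs d K | b == a] = [:: a].
  have := boxs_uniq d K; elim: (boxs d K) aB => [//|c s IH] /=.
  rewrite in_cons => /orP[/eqP <-|aS] /andP[cs us].
    rewrite eqxx; congr (_ :: _); apply/eqP; rewrite -[_ == _]negbK -has_filter.
    by apply/hasPn => z zs; apply: contraNneq cs => <-.
  have -> : (c == a) = false by apply/negbTE; apply: contraNneq cs => ->.
  exact: IH.
by rewrite big_seq1 normCK.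
Qed.

Lemma parsevalR (w : mindex d -> C) :
  \sum_(k : {ffun 'I_d -> 'I_K}) cabs (\sum_(a <- boxs d K) w a * mon (zeta k) a) ^+ 2
  = (K ^ d)%:R * \sum_(a <- boxs d K) cabs (w a) ^+ 2.
Proof.
apply: (@complexI R).
rewrite rmorphM rmorph_nat !rmorph_sum /=.
under eq_bigr do rewrite rmorphXn.
under [in RHS]eq_bigr do rewrite rmorphXn.
exact: parseval.
Qed.

Lemma parsevalR' (w : mindex d -> C) :
  \sum_(a <- boxs d K) cabs (w a) ^+ 2 = 
  (K ^ d)%:R^-1 * \sum_(k : {ffun 'I_d -> 'I_K}) cabs (\sum_(a <- boxs d K) w a * mon (zeta k) a) ^+ 2.
Proof.
by rewrite parsevalR mulrA mulVf ?mul1r // pnatr_eq0 -lt0n expn_gt0 K0.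
Qed.

End Parseval.
Lemma bernoulli (R : realFieldType) (t : R) (n : nat) :
  0 <= t -> t <= 1 -> 1 - n%:R * t <= (1 - t) ^+ n.
Proof.
move=> t0 t1; elim: n => [|n IH]; first by rewrite mul0r subr0 expr0.
rewrite exprS.
have h : 0 <= 1 - t by rewrite subr_ge0.
apply: le_trans (ler_wpM2l h IH).
rewrite -natr1.
have n0 : 0 <= n%:R :> R by [].
nra.
Qed.

Lemma le_limit (R : realFieldType) (S B : R) (n : nat) : 0 <= S ->
  (forall r, 0 < r -> r < 1 -> r ^+ n * S <= B) -> S <= B.
Proof.
move=> S0 H.
have B0 : 0 <= B.
  apply: le_trans (H (2^-1) _ _) => //; last by rewrite invf_lt1 // ltr1n.
  by apply: mulr_ge0 => //; apply: exprn_ge0.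
rewrite leNgt; apply/negP => BS.
pose q := n%:R * S + S + 1.
have n0 : 0 <= n%:R :> R by [].
have q0 : 0 < q by rewrite /q; nra.
pose t := (S - B) / (2 * q).
have tq : t * (2 * q) = S - B by rewrite /t mulfVK // mulf_neq0 // gt_eqF.
have t0 : 0 < t by rewrite /t divr_gt0 // ?subr_gt0 // mulr_gt0.
have t1 : t < 1.
  rewrite /t ltr_pdivrMr ?mul1r ?mulr_gt0 //; rewrite /q; nra.
have := H (1 - t); rewrite subr_gt0 t1 ltrBlDr ltrDl t0 => /(_ isT isT) h1.
have h2 := bernoulli n (ltW t0) (ltW t1).
have h3 : (1 - n%:R * t) * S <= B.
  by apply: le_trans h1; apply: ler_wpM2r.
rewrite /q in tq; nra.
Qed.

Section Cabs.
Variable R : realType.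
Local Notation C := R[i].
Local Open Scope complex_scope.

Lemma cabsE (z : C) : (cabs z)%:C = `|z|. Proof. by []. Qed.

Lemma cabs_ge0 (z : C) : 0 <= cabs z.
Proof. by rewrite -(@lecR R) cabsE normr_ge0. Qed.

Lemma cabsM (z w : C) : cabs (z * w) = cabs z * cabs w.
Proof. exact: Normc.normcM. Qed.

Lemma cabs0 : cabs (0 : C) = 0.
Proof. by apply: (@complexI R); rewrite cabsE normr0. Qed.

Lemma cabs_real (s : R) : 0 <= s -> cabs s%:C = s.
Proof.
by move=> s0; apply: (@complexI R); rewrite cabsE ger0_norm // ler0c.
Qed.

Lemma cabsX (z : C) k : cabs (z ^+ k) = cabs z ^+ k.
Proof. by apply: (@complexI R); rewrite cabsE normrX rmorphXn. Qed.

Lemma cabs2_ge0 (z : C) : 0 <= cabs z ^+ 2.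
Proof. by rewrite exprn_ge0 // cabs_ge0. Qed.

End Cabs.

Section Conv.
Variable R : realType.
Local Notation C := R[i].
Local Open Scope complex_scope.
Variable d : nat.

Definition mi (m : mpoly.multinom d) : mindex d := [ffun j => mpoly.fun_of_multinom m j].

Definition conv (p : mpoly.mpoly d C) (u : mindex d -> C) (a : mindex d) : C :=
  \sum_(m <- mpoly.msupp p)
     mpoly.mcoeff m p * (if le_mi (mi m) a then u (subm a (mi m)) else 0).

Lemma prim_root_C K : (0 < K)%N -> exists w0 : C, K.-primitive_root w0.
Proof.
move=> K0.
pose q : {poly C} := 'X^K - 1; have [r Dp] := closed_field_poly_normal q.
rewrite (monicP _) ?monicXnsubC // scale1r in Dp.
have rn1: all K.-unity_root r by apply/allP=> z; rewrite -root_prod_XsubC -Dp.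
have sz_r: (K < (size r).+1)%N.
  by rewrite -(size_prod_XsubC r id) -Dp size_XnsubC.
have [|z] := hasP (cyclic.has_prim_root K0 rn1 _ sz_r); last by exists z.
by rewrite -separable.separable_prod_XsubC -Dp cyclotomic.separable_Xn_sub_1 // pnatr_eq0 -lt0n.
Qed.

Lemma eq_big_In (T : Type) (V : nmodType) (s : seq T) (F G : T -> V) :
  (forall x, List.In x s -> F x = G x) -> \sum_(x <- s) F x = \sum_(x <- s) G x.
Proof.
elim: s => [_|x s IH H]; first by rewrite !big_nil.
rewrite !big_cons H /=; last by left.
by rewrite IH // => y ys; apply: H; right.
Qed.

Definition Dp (p : mpoly.mpoly d C) : nat :=
  (\sum_(m <- mpoly.msupp p) mpoly.mdeg m).+1.

Lemma mcoord_lt (p : mpoly.mpoly d C) (m : mpoly.multinom d) (j : 'I_d) :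
  List.In m (mpoly.msupp p) -> (mpoly.fun_of_multinom m j < Dp p)%N.
Proof.
move=> mp; rewrite ltnS.
have h1 : (mpoly.fun_of_multinom m j <= mpoly.mdeg m)%N.
  by rewrite mpoly.mdegE (bigD1 j) //= leq_addr.
apply: leq_trans h1 _.
elim: (mpoly.msupp p) mp => [//|m' s IH] /= [->|ms].
  by rewrite big_cons leq_addr.
by rewrite big_cons; apply: leq_trans (IH ms) _; apply: leq_addl.
Qed.

Lemma conv_mon (p : mpoly.mpoly d C) (u : mindex d -> C) N K (z : 'I_d -> C) :
  (N + Dp p <= K)%N -> (forall a, a \notin boxs d N -> u a = 0) ->
  \sum_(a <- boxs d K) conv p u a * mon z a
  = mpoly.meval z p * \sum_(b <- boxs d K) u b * mon z b.
Proof.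
move=> NK us.
have NK' : (N <= K)%N by apply: leq_trans NK; apply: leq_addr.
have uK : \sum_(b <- boxs d K) u b * mon z b = \sum_(b <- boxs d N) u b * mon z b.
  rewrite (@sum_reindex _ _ _ (boxs d N) (boxs d K) id (fun b => u b * mon z b)).
  - by [].
  - exact: boxs_uniq.
  - exact: boxs_uniq.
  - by move=> x y _ _.
  - by move=> b bN; apply: boxs_sub bN.
  - by move=> a _; rewrite map_id => /us ->; rewrite mul0r.
rewrite uK mpoly.mevalE mulr_suml /conv.
under eq_bigr do rewrite mulr_suml.
rewrite exchange_big /=; apply: eq_big_In => m mp.
rewrite (@sum_reindex _ _ _ (boxs d N) (boxs d K) (fun b => addm b (mi m))
  (fun a => mpoly.mcoeff m p * (if le_mi (mi m) a then u (subm a (mi m)) else 0) * mon z a)).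
- rewrite mulr_sumr; apply: eq_bigr => b _ /=.
  rewrite le_mi_addm addmK.
  have -> : mon z (addm b (mi m)) = mon z b * \prod_i z i ^+ mpoly.fun_of_multinom m i.
    rewrite /mon -big_split /=; apply: eq_bigr => j _.
    by rewrite !ffunE exprD.
  ring.
- exact: boxs_uniq.
- exact: boxs_uniq.
- by move=> x y _ _; apply: addm_inj.
- move=> b; rewrite !mem_boxs => /forallP bN; apply/forallP => j.
  rewrite !ffunE.
  have := mcoord_lt j mp; have := bN j; move: NK.
  by move=> h1 h2 h3; apply: leq_trans h1; rewrite -addnS; apply: leq_add => //; apply: ltnW.
- move=> a aK na /=.
  case: ifP => [ma|]; last by rewrite mulr0 mul0r.
  case: (boolP (subm a (mi m) \in boxs d N)) => [sN|/us ->]; last by rewrite mulr0 mul0r.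
  by move: na; rewrite -{1}(submK ma) (map_f (fun b => addm b (mi m)) sN).
Qed.

Lemma conv_bound (p : mpoly.mpoly d C) (M : R) :
  (forall z : 'I_d -> C, (forall k, cabs (z k) < 1) -> cabs (mpoly.meval z p) <= M) ->
  forall N (u : mindex d -> C), (forall a, a \notin boxs d N -> u a = 0) ->
  \sum_(a <- boxs d N) cabs (conv p u a) ^+ 2
    <= M ^+ 2 * \sum_(a <- boxs d N) cabs (u a) ^+ 2.
Proof.
move=> hM N u us.
have M0 : 0 <= M.
  apply: le_trans (hM (fun _ => 0) _); first exact: cabs_ge0.
  by move=> k; rewrite cabs0 ltr01.
pose K := (N + Dp p).+1.
have K0 : (0 < K)%N by [].
have [w0 w0p] := prim_root_C K0.
have w0K : w0 ^+ K = 1 := prim_expr_order w0p.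
have w0e : forall e, (0 < e < K)%N -> w0 ^+ e != 1.
  move=> e /andP[e0 eK]; rewrite -(prim_order_dvd w0p).
  by apply/negP => /(dvdn_leq e0); rewrite leqNgt eK.
have NK : (N + Dp p <= K)%N by apply: leqnSn.
have NK' : (N <= K)%N by apply: leq_trans NK; apply: leq_addr.
pose S := \sum_(a <- boxs d K) cabs (conv p u a) ^+ 2.
pose T := \sum_(a <- boxs d N) cabs (u a) ^+ 2.
have TK : \sum_(a <- boxs d K) cabs (u a) ^+ 2 = T.
  rewrite (@sum_reindex _ _ _ (boxs d N) (boxs d K) id (fun a => cabs (u a) ^+ 2)).
  - by [].
  - exact: boxs_uniq.
  - exact: boxs_uniq.
  - by move=> x y _ _.
  - by move=> b bN; apply: boxs_sub bN.
  - by move=> a _; rewrite map_id => /us ->; rewrite cabs0 expr0n.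
have key : forall r, 0 < r -> r < 1 -> r ^+ (2 * (d * K)) * S <= M ^+ 2 * T.
  move=> r r0 r1.
  pose z (k : {ffun 'I_d -> 'I_K}) : 'I_d -> C := fun j => r%:C * w0 ^+ (k j).
  have zn k j : cabs (z k j) < 1.
    rewrite /z cabsM cabsX cabs_real ?ltW //.
    have -> : cabs w0 = 1 by apply: (@complexI R); rewrite cabsE (normw0 K0 w0K).
    by rewrite expr1n mulr1.
  have monz k a : mon (z k) a = (r ^+ msum a)%:C * mon (zeta w0 k) a.
    rewrite /mon /z; under eq_bigr do rewrite exprMn.
    rewrite big_split /= prodrXr rmorphXn //.
  pose Wc a := conv p u a * (r ^+ msum a)%:C.
  pose Wu a := u a * (r ^+ msum a)%:C.
  have e1 k : \sum_(a <- boxs d K) Wc a * mon (zeta w0 k) a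
            = mpoly.meval (z k) p * \sum_(a <- boxs d K) Wu a * mon (zeta w0 k) a.
    have eL : \sum_(a <- boxs d K) Wc a * mon (zeta w0 k) a
            = \sum_(a <- boxs d K) conv p u a * mon (z k) a.
      by apply: eq_bigr => a _; rewrite monz /Wc mulrA.
    have eR : \sum_(a <- boxs d K) Wu a * mon (zeta w0 k) a
            = \sum_(a <- boxs d K) u a * mon (z k) a.
      by apply: eq_bigr => a _; rewrite monz /Wu mulrA.
    by rewrite eL eR; exact: (conv_mon (z k) NK us).
  have r0' : 0 <= r by apply: ltW.
  have r1' : r <= 1 by apply: ltW.
  have P1 := parsevalR K0 w0K w0e Wc.
  have P2 := parsevalR K0 w0K w0e Wu.
  have Kd0 : 0 < (K ^ d)%:R :> R by rewrite ltr0n expn_gt0 K0.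
  have h1 : \sum_(a <- boxs d K) cabs (Wc a) ^+ 2 <= M ^+ 2 * \sum_(a <- boxs d K) cabs (Wu a) ^+ 2.
    rewrite -(ler_pM2l Kd0) mulrCA -P1 -P2 mulr_sumr; apply: ler_sum => k _.
    rewrite e1 cabsM exprMn; apply: ler_wpM2r; first exact: cabs2_ge0.
    rewrite !expr2; apply: ler_pM; try exact: cabs_ge0.
      exact: hM (zn k).
    exact: hM (zn k).
  have h2 : r ^+ (2 * (d * K)) * S <= \sum_(a <- boxs d K) cabs (Wc a) ^+ 2.
    rewrite /S mulr_sumr big_seq [leRHS]big_seq; apply: ler_sum => a aK.
    rewrite /Wc cabsM cabs_real ?exprn_ge0 // exprMn mulrC; apply: ler_wpM2l.
      exact: cabs2_ge0.
    rewrite -exprM; apply: ler_wiXn2l => //.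
    by rewrite mulnC leq_mul2l /= msum_le_box.
  have h3 : \sum_(a <- boxs d K) cabs (Wu a) ^+ 2 <= T.
    rewrite -TK; apply: ler_sum => a _.
    rewrite /Wu cabsM cabs_real ?exprn_ge0 // exprMn; apply: ler_piMr.
      exact: cabs2_ge0.
    by apply: exprn_ile1; rewrite ?exprn_ge0 // exprn_ile1.
  apply: le_trans h2 _; apply: le_trans h1 _; apply: ler_wpM2l => //.
  exact: exprn_ge0.
have SB := le_limit (sumr_ge0 _ (fun a _ => cabs2_ge0 _)) key.
apply: le_trans SB.
apply: sum_le_sub; [exact: boxs_uniq|exact: boxs_uniq|exact: boxs_sub|].
by move=> a _; apply: cabs2_ge0.
Qed.

End Conv.
(* ---------- layer cake ---------- *)
Section Layer.
Variable R : realType.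
Local Notation C := R[i].
Variable d : nat.
Variable p : mpoly.mpoly d C.
Variable M : R.
Hypothesis hM : forall z : 'I_d -> C, (forall k, cabs (z k) < 1) -> cabs (mpoly.meval z p) <= M.
Variable N : nat.
Variable u : mindex d -> C.

Lemma downset_bound (P : pred (mindex d)) : (forall a b, le_mi b a -> P a -> P b) ->
  \sum_(a <- boxs d N) (if P a then cabs (conv p u a) ^+ 2 else 0)
  <= M ^+ 2 * \sum_(a <- boxs d N) (if P a then cabs (u a) ^+ 2 else 0).
Proof.
move=> Pd.
pose v a := if P a && (a \in boxs d N) then u a else 0.
have vs : forall a, a \notin boxs d N -> v a = 0.
  by move=> a /negbTE an; rewrite /v an andbF.
have e1 : \sum_(a <- boxs d N) (if P a then cabs (conv p u a) ^+ 2 else 0)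
        = \sum_(a <- boxs d N) (if P a then cabs (conv p v a) ^+ 2 else 0).
  apply: eq_big_seq => a aN; case: ifP => // Pa.
  congr (cabs _ ^+ 2); apply: eq_bigr => m _; case: ifP => // _.
  rewrite /v (Pd a) ?le_mi_subm // (boxs_down (le_mi_subm a (mi m)) aN) //.
have e2 : \sum_(a <- boxs d N) cabs (v a) ^+ 2
        = \sum_(a <- boxs d N) (if P a then cabs (u a) ^+ 2 else 0).
  apply: eq_big_seq => a aN; rewrite /v aN andbT; case: ifP => //.
  by rewrite cabs0 expr0n.
rewrite e1 -e2; apply: le_trans _ (conv_bound hM vs).
apply: ler_sum => a _; case: ifP => // _; exact: cabs2_ge0.
Qed.

Lemma weighted_bound (om : mindex d -> R) :
  (forall a, 0 <= om a) -> (forall a b, le_mi b a -> om a <= om b) ->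
  \sum_(a <- boxs d N) om a * cabs (conv p u a) ^+ 2
  <= M ^+ 2 * \sum_(a <- boxs d N) om a * cabs (u a) ^+ 2.
Proof.
have M0 : 0 <= M.
  have h0 : cabs (mpoly.meval (fun _ => 0) p) <= M by apply: hM => k; rewrite cabs0 ltr01.
  exact: le_trans (cabs_ge0 _) h0.
move=> om0 omd.
suff H : forall c (om : mindex d -> R), (count (fun a => (0 < om a)%R) (boxs d N) <= c)%N ->
  (forall a, 0 <= om a) -> (forall a b, le_mi b a -> om a <= om b) ->
  \sum_(a <- boxs d N) om a * cabs (conv p u a) ^+ 2
  <= M ^+ 2 * \sum_(a <- boxs d N) om a * cabs (u a) ^+ 2.
  exact: (H _ om (leqnn _) om0 omd).
clear om om0 omd.
elim=> [|c IH] om cnt om0 omd.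
- have z : forall a, a \in boxs d N -> om a = 0.
    move=> a aN; apply/eqP; rewrite eq_le om0 andbT leNgt; apply/negP => oa.
    move: cnt; rewrite leqn0 => c0.
    have : ~~ has (fun a => 0 < om a) (boxs d N) by rewrite has_count lt0n negbK.
    by move/hasPn/(_ a aN); rewrite oa.
  rewrite big_seq big1 ?mulr_ge0 ?sumr_ge0 //; last by move=> a aN; rewrite z ?mul0r.
  by move=> a _; rewrite mulr_ge0 // cabs2_ge0.
- case: (boolP (has (fun a => 0 < om a) (boxs d N))) => [hp|hn]; last first.
    have z : forall a, a \in boxs d N -> om a = 0.
      move=> a aN; apply/eqP; rewrite eq_le om0 andbT leNgt; apply/negP => oa.
      by move/hasPn: hn => /(_ a aN); rewrite oa.
    rewrite big_seq big1 ?mulr_ge0 ?sumr_ge0 //; last by move=> a aN; rewrite z ?mul0r.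
    by move=> a _; rewrite mulr_ge0 // cabs2_ge0.
  pose s' := [seq a <- boxs d N | 0 < om a].
  have s'n : s' != [::] by rewrite -size_eq0 size_filter -lt0n -has_count.
  have [a0 a0s a0m] := seq_min om s'n.
  move: a0s; rewrite mem_filter => /andP[oa0 a0N].
  pose P a := (a \in boxs d N) && (0 < om a).
  have Pd : forall a b, le_mi b a -> P a -> P b.
    move=> a b ba /andP[aN oa]; rewrite /P (boxs_down ba aN) /=.
    exact: lt_le_trans oa (omd _ _ ba).
  pose mu := om a0.
  pose om' a := if P a then om a - mu else 0.
  have om'0 : forall a, 0 <= om' a.
    move=> a; rewrite /om'; case: ifP => // /andP[aN oa].
    by rewrite subr_ge0; apply: a0m; rewrite mem_filter oa aN.
  have om'd : forall a b, le_mi b a -> om' a <= om' b.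
    move=> a b ba; rewrite /om'; case: ifP => [Pa|_]; last exact: om'0.
    by rewrite (Pd a b ba Pa) lerD2r omd.
  have cnt' : (count (fun a => (0 < om' a)%R) (boxs d N) <= c)%N.
    have h1 : (count (fun a => (0 < om' a)%R) (boxs d N)
              <= count (fun a => (0 < om a)%R && (a != a0)) (boxs d N))%N.
      apply: sub_count => a; rewrite /om'; case: ifP => [/andP[_ oa]|]; last by rewrite ltxx.
      rewrite oa /= subr_gt0; apply: contraTneq => ->; by rewrite ltxx.
    have h2 := @count_rm _ (fun a => (0 < om a)%R) _ _ (boxs_uniq d N) a0N oa0.
    rewrite -ltnS; apply: leq_ltn_trans h1 _; rewrite h2; exact: cnt.
  have dec (X : mindex d -> R) : \sum_(a <- boxs d N) om a * X a
      = mu * \sum_(a <- boxs d N) (if P a then X a else 0) + \sum_(a <- boxs d N) om' a * X a.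
    rewrite mulr_sumr -big_split /=; apply: eq_big_seq => a aN.
    rewrite /om'; case: ifP => [_|]; first by ring.
    rewrite /P aN /= => /negbT; rewrite -leNgt => oa.
    have -> : om a = 0 by apply/eqP; rewrite eq_le oa om0.
    by rewrite mulr0 !mul0r addr0.
  rewrite !dec mulrDr.
  have mu0 : 0 <= mu by apply: ltW.
  apply: lerD; last exact: IH.
  rewrite mulrCA; apply: ler_wpM2l => //; exact: downset_bound.
Qed.

End Layer.
Section Eps.
Variable d : nat.
Implicit Types a b c : mindex d.

Lemma addepsE a j i : addeps a j i = (a i + (i == j))%N.
Proof. by rewrite ffunE. Qed.
Lemma subepsE a j i : subeps a j i = (a i - (i == j))%N.
Proof. by rewrite ffunE. Qed.

Lemma subeps_addeps a j : subeps (addeps a j) j = a.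
Proof. by apply/ffunP => i; rewrite !ffunE addnK. Qed.

Lemma addeps_subeps a j : (0 < a j)%N -> addeps (subeps a j) j = a.
Proof.
move=> aj; apply/ffunP => i; rewrite !ffunE.
case: (eqVneq i j) => [->|_]; last by rewrite !subn0 addn0.
by rewrite subnK.
Qed.

Lemma subeps_addeps_ne a i j : i != j -> subeps (addeps a j) i = addeps (subeps a i) j.
Proof.
move=> ij; apply/ffunP => l; rewrite !ffunE.
case: (eqVneq l i) => [->|li]; first by rewrite (negbTE ij) !addn0.
by rewrite !subn0.
Qed.

Lemma msum_addeps a j : msum (addeps a j) = (msum a).+1.
Proof.
rewrite /msum (bigD1 j) //= [in RHS](bigD1 j) //= ffunE eqxx addn1 addSn; congr _.+1.
by congr (_ + _)%N; apply: eq_bigr => i ij; rewrite ffunE (negbTE ij) addn0.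
Qed.

Lemma coord_le_msum a j : (a j <= msum a)%N.
Proof. by rewrite /msum (bigD1 j) //= leq_addr. Qed.

End Eps.

Section Scalar.
Variable R : realType.
Local Notation C := R[i].
Variable d : nat.
Variable al : 'I_d -> mindex d -> C.
Hypothesis al_comm : forall i j a,
  al i (addeps a j) * al j a = al j (addeps a i) * al i a.
Hypothesis al_nz : forall j a, al j a != 0.

Definition sshift j (X : mindex d -> C) : mindex d -> C :=
  fun a => if a j == 0%N then 0 else al j (subeps a j) * X (subeps a j).
Definition smono (m : 'I_d -> nat) (X : mindex d -> C) : mindex d -> C :=
  foldr (fun j y => iter (m j) (sshift j) y) X (enum 'I_d).

Fixpoint Vf (s : nat) (a : mindex d) : C :=
  match s with
  | 0 => 1
  | s'.+1 => match [pick j | (0 < a j)%N] with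
             | Some j => al j (subeps a j) * Vf s' (subeps a j)
             | None => 1
             end
  end.
Definition vw (a : mindex d) := Vf (msum a) a.

Lemma Vf_neq0 s a : Vf s a != 0.
Proof.
elim: s a => [|s IH] a /=; first exact: oner_neq0.
case: pickP => [j _|_]; last exact: oner_neq0.
by rewrite mulf_neq0.
Qed.

Lemma vw_neq0 a : vw a != 0.
Proof. exact: Vf_neq0. Qed.

Lemma vw_step a j : vw (addeps a j) = al j a * vw a.
Proof.
suff H : forall s a, msum a = s -> forall j, vw (addeps a j) = al j a * vw a.
  exact: H.
elim=> [|s IH] {}a sa {}j;
  rewrite /vw msum_addeps /=;
  (case: pickP => [i Hi|H]; last by have := H j; rewrite addepsE eqxx addn1);
  (case: (eqVneq i j) => [->|ij]; first by rewrite subeps_addeps);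
  move: Hi; rewrite addepsE (negbTE ij) addn0 => ai.
- by have := coord_le_msum a i; rewrite sa leqn0 => /eqP ai0; rewrite ai0 in ai.
- set c := subeps a i.
  have ac : a = addeps c i by rewrite addeps_subeps.
  have sc : msum c = s by move: sa; rewrite ac msum_addeps => -[].
  rewrite subeps_addeps_ne // -/c.
  have -> : Vf (msum a) (addeps c j) = vw (addeps c j) by rewrite /vw !msum_addeps sa sc.
  rewrite (IH c sc j).
  have -> : Vf (msum a) a = vw a by [].
  rewrite [in RHS]ac (IH c sc i) -ac.
  by rewrite mulrA al_comm -ac mulrA.
Qed.

Definition Sh j (Y : mindex d -> C) : mindex d -> C :=
  fun a => if a j == 0%N then 0 else Y (subeps a j).

Lemma sshift_vw j Y : sshift j (fun a => vw a * Y a) = (fun a => vw a * Sh j Y a).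
Proof.
apply: funext => a; rewrite /sshift /Sh; case: ifP => [_|aj]; first by rewrite mulr0.
rewrite mulrA -vw_step addeps_subeps //; by rewrite lt0n aj.
Qed.

Lemma smono_vw m Y : smono m (fun a => vw a * Y a)
  = (fun a => vw a * foldr (fun j y => iter (m j) (Sh j) y) Y (enum 'I_d) a).
Proof.
rewrite /smono; elim: (enum 'I_d) => [//|j l IH] /=.
rewrite IH; elim: (m j) => [//|t IHt] /=.
by rewrite IHt sshift_vw.
Qed.

Definition subt (a : mindex d) j t : mindex d := [ffun i => a i - (if i == j then t else 0)]%N.

Lemma iter_Sh j t Z a : iter t (Sh j) Z a = if (t <= a j)%N then Z (subt a j t) else 0.
Proof.
elim: t a => [|t IH] a /=.
  by congr Z; apply/ffunP => i; rewrite ffunE; case: ifP => _; rewrite subn0.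
rewrite /Sh; case: (eqVneq (a j) 0%N) => [->//|aj].
rewrite IH subepsE eqxx.
have -> : (t <= a j - 1)%N = (t < a j)%N.
  by move: aj; case: (a j) => // q _; rewrite subSS subn0.
case: ifP => // _; congr Z; apply/ffunP => i; rewrite !ffunE.
by case: (i == j); rewrite ?subn0 // -subnDA add1n.
Qed.

Lemma foldr_Sh (m : 'I_d -> nat) (l : seq 'I_d) Z a : uniq l ->
  foldr (fun j y => iter (m j) (Sh j) y) Z l a
  = if all (fun j => m j <= a j)%N l
    then Z [ffun i => a i - (if i \in l then m i else 0)]%N else 0.
Proof.
elim: l a => [|j l IH] a /=.
  by move=> _; congr Z; apply/ffunP => i; rewrite ffunE subn0.
move=> /andP[jl ul]; rewrite iter_Sh.
case: (leqP (m j) (a j)) => mj /=; last by [].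
rewrite IH //.
have ea : {in l, forall i, subt a j (m j) i = a i}.
  move=> i il; rewrite ffunE; case: (eqVneq i j) => [eij|]; last by rewrite subn0.
  by move: jl; rewrite -eij il.
rewrite (eq_in_all (a2 := fun i => m i <= a i)%N); last first.
  by move=> i il /=; rewrite ea.
case: ifP => // _; congr Z; apply/ffunP => i; rewrite !ffunE in_cons.
case: (eqVneq i j) => [->|ij] /=.
  by rewrite (negbTE jl) subn0.
by rewrite subn0.
Qed.

Lemma foldr_Sh_enum (m : 'I_d -> nat) Z a :
  foldr (fun j y => iter (m j) (Sh j) y) Z (enum 'I_d) a
  = if le_mi [ffun j => m j] a then Z (subm a [ffun j => m j]) else 0.
Proof.
rewrite foldr_Sh ?enum_uniq //.
have -> : all (fun j => m j <= a j)%N (enum 'I_d) = le_mi [ffun j => m j] a.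
  apply/allP/forallP => [H j|H j _]; first by rewrite ffunE; apply: H; rewrite mem_enum.
  by have := H j; rewrite ffunE.
case: ifP => // _; congr Z; apply/ffunP => i; rewrite !ffunE mem_enum.
by [].
Qed.

End Scalar.
Section Op.
Variable R : realType.
Local Notation C := R[i].
Variables (n d : nat) (A : 'I_d -> mindex d -> 'M[C]_n).

Lemma diag_mulmx m (B : 'M[C]_n) (D : 'M[C]_(n, m)) k l :
  is_diag_mx B -> (B *m D) k l = B k k * D k l.
Proof.
move=> /forallP H; rewrite mxE (bigD1 k) //= big1 ?addr0 // => i ik.
have /forallP/(_ i)/implyP := H k.
have ki : (k != i :> nat) by rewrite eq_sym.
by move=> /(_ ki)/eqP ->; rewrite mul0r.
Qed.

Hypothesis Adiag : forall j a, is_diag_mx (A j a).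

Definition alk (k : 'I_n) : 'I_d -> mindex d -> C := fun j a => A j a k k.

Lemma mshift_coord k j x :
  (fun a => mshift A j x a k 0) = sshift (alk k) j (fun a => x a k 0).
Proof.
apply: funext => a; rewrite /mshift /sshift; case: ifP => _; first by rewrite mxE.
by rewrite diag_mulmx.
Qed.

Lemma mono_coord k m x :
  (fun a => mshift_mono A m x a k 0) = smono (alk k) m (fun a => x a k 0).
Proof.
rewrite /mshift_mono /smono; elim: (enum 'I_d) => [//|j l IH] /=.
elim: (m j) => [//|t IHt] /=.
by rewrite -IHt mshift_coord.
Qed.

Hypothesis al_comm : forall k i j a,
  alk k i (addeps a j) * alk k j a = alk k j (addeps a i) * alk k i a.
Hypothesis al_nz : forall k j a, alk k j a != 0.

Lemma polyT_coord k (p : mpoly.mpoly d C) x a :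
  polyT A p x a k 0
  = vw (alk k) a * conv p (fun b => x b k 0 / vw (alk k) b) a.
Proof.
rewrite /polyT summxE /conv mulr_sumr; apply: eq_bigr => m _.
rewrite mxE.
have := congr1 (fun f => f a) (mono_coord k (mpoly.fun_of_multinom m) x) => /= ->.
have -> : (fun b => x b k 0) = (fun b => vw (alk k) b * (x b k 0 / vw (alk k) b)).
  by apply: funext => b; rewrite mulrC divfK // vw_neq0.
rewrite (smono_vw (al_comm k)) foldr_Sh_enum.
by rewrite mulrCA.
Qed.

End Op.
Section Weights.
Variable R : realType.
Local Notation C := R[i].
Variable d : nat.
Variable al : 'I_d -> mindex d -> C.
Hypothesis al_comm : forall i j a,
  al i (addeps a j) * al j a = al j (addeps a i) * al i a.
Hypothesis al_le1 : forall j a, cabs (al j a) ^+ 2 <= 1.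

Definition om (a : mindex d) : R := cabs (vw al a) ^+ 2.

Lemma om_ge0 a : 0 <= om a.
Proof. exact: cabs2_ge0. Qed.

Lemma om_step a j : om (addeps a j) <= om a.
Proof.
rewrite /om (vw_step al_comm) cabsM exprMn; apply: ler_piMl => //; exact: cabs2_ge0.
Qed.

Lemma om_dec a b : le_mi b a -> om a <= om b.
Proof.
suff H : forall s a, le_mi b a -> msum (subm a b) = s -> om a <= om b.
  by move=> ba; exact: H _ a ba erefl.
elim=> [|s IH] {}a ba sab.
  have -> : a = b; last by [].
  apply/ffunP => j; apply/eqP; rewrite eqn_leq (forallP ba j) andbT.
  by have := coord_le_msum (subm a b) j; rewrite sab leqn0 ffunE subn_eq0.
have [j bj] : exists j, (b j < a j)%N.
  apply/existsP; apply: contraT => /existsPn H.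
  suff : msum (subm a b) = 0%N by rewrite sab.
  rewrite /msum big1 // => j _; rewrite ffunE; apply/eqP; rewrite subn_eq0 leqNgt.
  exact: H.
pose a' := subeps a j.
have aj : (0 < a j)%N by apply: leq_ltn_trans bj.
have ea : a = addeps a' j by rewrite addeps_subeps.
have ba' : le_mi b a'.
  apply/forallP => i; rewrite ffunE; have := forallP ba i.
  case: (eqVneq i j) => [->|_] /=; last by rewrite subn0.
  move=> _; lia.
have s' : msum (subm a' b) = s.
  have : subm a b = addeps (subm a' b) j.
    apply/ffunP => i; rewrite !ffunE; have := forallP ba i.
    case: (eqVneq i j) => [->|_] /=; last by rewrite !subn0 addn0.
    move=> _; lia.
  by move/(congr1 (@msum d)); rewrite msum_addeps sab => -[].
rewrite ea; apply: le_trans (om_step _ _) _.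
exact: IH.
Qed.

End Weights.

Unset Implicit Arguments.

Theorem corollary3p5 (R : realType) (n d : nat)
    (A : 'I_d -> mindex d -> 'M[R[i]]_n) :
  (0 < n)%N -> (0 < d)%N ->
  (* weights are invertible diagonal matrices *)
  (forall (j : 'I_d) (a : mindex d), is_diag_mx (A j a) /\ A j a \in unitmx) ->
  (* sup_alpha ||A^(j)_alpha|| < oo *)
  (forall j : 'I_d, exists K : R, forall (a : mindex d) (v : 'cV[R[i]]_n),
      vnorm2 (A j a *m v) <= K * vnorm2 v) ->
  (* commutativity condition *)
  (forall (i j : 'I_d) (a : mindex d),
      A i (addeps a j) *m A j a = A j (addeps a i) *m A i a) ->
  (* contractive: ||T_j|| <= 1 on l^2 *)
  (forall (j : 'I_d) (x : mindex d -> 'cV[R[i]]_n),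
      (l2norm2 x < +oo)%E -> (l2norm2 (mshift A j x) <= l2norm2 x)%E) ->
  (* von Neumann's inequality *)
  forall (p : mpoly.mpoly d R[i]) (M : R),
    (forall z : 'I_d -> R[i], (forall k, cabs (z k) < 1) ->
        cabs (mpoly.meval z p) <= M) ->
    forall x : mindex d -> 'cV[R[i]]_n, (l2norm2 x < +oo)%E ->
      (l2norm2 (polyT A p x) <= (M ^+ 2)%:E * l2norm2 x)%E.
Proof.
move=> n0 d0 Hdiag Hbd Hcomm Hcontr p M hM x hx.
have Adiag : forall j a, is_diag_mx (A j a) by move=> j a; case: (Hdiag j a).
have al_comm : forall k i j a,
    alk A k i (addeps a j) * alk A k j a = alk A k j (addeps a i) * alk A k i a.
  move=> k i j a; have := congr1 (fun B : 'M[R[i]]_n => B k k) (Hcomm i j a).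
  by rewrite /= !diag_mulmx.
have al_nz : forall k j a, alk A k j a != 0.
  move=> k j a; have [_ Hu] := Hdiag j a.
  have := congr1 (fun B : 'M[R[i]]_n => B k k) (mulmxV Hu).
  rewrite /= diag_mulmx // mxE eqxx /= => h; apply/eqP => h0.
  by move: h; rewrite /alk in h0; rewrite h0 mul0r => /eqP; rewrite eq_sym oner_eq0.
have vn_ge (v : 'cV[R[i]]_n) k : cabs (v k 0) ^+ 2 <= vnorm2 v.
  rewrite /vnorm2 (bigD1 k) //= lerDl; apply: sumr_ge0 => i _; exact: cabs2_ge0.
have vn_ge0 (v : 'cV[R[i]]_n) : 0 <= vnorm2 v.
  by apply: sumr_ge0 => i _; exact: cabs2_ge0.
have al_le1 : forall k j a, cabs (alk A k j a) ^+ 2 <= 1.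
  move=> k j a.
  pose e : mindex d -> 'cV[R[i]]_n := fun b => if b == a then delta_mx k 0 else 0.
  have ve : forall b, (vnorm2 (e b))%:E = if b \in [set a]%classic then 1%:E else 0%E.
    move=> b; rewrite /e; case: (eqVneq b a) => [->|nba] /=.
      rewrite mem_set //; congr (_%:E); rewrite /vnorm2 (bigD1 k) //= big1 ?addr0.
        have -> : (delta_mx k 0 : 'cV[R[i]]_n) k 0 = 1 by rewrite mxE !eqxx.
        have c1 : cabs (1 : R[i]) = 1 by apply: (@complexI R); rewrite cabsE normr1.
        by rewrite c1 expr1n.
      move=> i ik.
      have -> : (delta_mx k 0 : 'cV[R[i]]_n) i 0 = 0 by rewrite mxE (negbTE ik).
      by rewrite cabs0 expr0n.
    rewrite memNset; last by move=> /= eba; rewrite eba eqxx in nba.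
    by congr (_%:E); rewrite /vnorm2 big1 // => i _; rewrite mxE cabs0 expr0n.
  have le1 : l2norm2 e = 1%E.
    rewrite /l2norm2 (eq_esum (fun b _ => ve b)) -esum_mkcond esum_set1 //.
  have := Hcontr j e; rewrite le1 ltry => /(_ isT) h.
  have h2 : ((cabs (alk A k j a) ^+ 2)%:E <= l2norm2 (mshift A j e))%E.
    apply: esum_ge; exists [set addeps a j]%classic.
      by split; [exact: finite_set1|].
    rewrite fsbig_set1 lee_fin; apply: le_trans (vn_ge _ k).
    rewrite /mshift addepsE eqxx addn1 /= subeps_addeps /e eqxx.
    by rewrite diag_mulmx // mxE !eqxx mulr1.
  by rewrite -lee_fin; apply: le_trans h.
pose Y k b := x b k 0 / vw (alk A k) b.
have F1 : forall a, vnorm2 (polyT A p x a)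
    = \sum_(k < n) om (alk A k) a * cabs (conv p (Y k) a) ^+ 2.
  move=> a; rewrite /vnorm2; apply: eq_bigr => k _.
  by rewrite (polyT_coord Adiag al_comm al_nz) cabsM exprMn.
have F2 : forall a, vnorm2 (x a) = \sum_(k < n) om (alk A k) a * cabs (Y k a) ^+ 2.
  move=> a; rewrite /vnorm2; apply: eq_bigr => k _.
  by rewrite /om -exprMn -cabsM /Y mulrC divfK // vw_neq0.
have F3 : forall N, \sum_(a <- boxs d N) vnorm2 (polyT A p x a)
                    <= M ^+ 2 * \sum_(a <- boxs d N) vnorm2 (x a).
  move=> N; under eq_bigr do rewrite F1.
  under [in X in _ <= _ * X]eq_bigr do rewrite F2.
  rewrite exchange_big [X in _ <= _ * X]exchange_big /= mulr_sumr.
  apply: ler_sum => k _; apply: (weighted_bound hM).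
  - by move=> a; exact: om_ge0.
  - by move=> a b ba; apply: om_dec.
have M0 : 0 <= M.
  have h0 : cabs (mpoly.meval (fun _ => 0) p) <= M by apply: hM => k; rewrite cabs0 ltr01.
  exact: le_trans (cabs_ge0 _) h0.
rewrite {1}/l2norm2 /esum; apply: ge_ereal_sup => _ [X [finX _] <-].
rewrite fsbig_finite //= sumEFin.
set s := finmap.enum_fset (fset_set X).
have us : uniq s by apply: finmap.fset_uniq.
pose N := (\sum_(a <- s) msum a).+1.
have sN : {subset s <= boxs d N}.
  move=> a as'; rewrite mem_boxs; apply/forallP => j.
  rewrite ltnS; apply: leq_trans (coord_le_msum a j) _.
  by rewrite (big_rem a) //= leq_addr.
apply: (@le_trans _ _ ((M ^+ 2 * \sum_(a <- boxs d N) vnorm2 (x a))%:E)).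
  rewrite lee_fin; apply: le_trans (F3 N).
  apply: sum_le_sub; [exact: us|exact: boxs_uniq|exact: sN|by move=> a _; apply: vn_ge0].
rewrite EFinM; apply: lee_pmul => //.
  - by rewrite lee_fin exprn_ge0.
  - by rewrite lee_fin; apply: sumr_ge0 => a _; apply: vn_ge0.
apply: esum_ge; exists [set` boxs d N]%classic.
  by split; [exact: finite_seq|].
by rewrite -fsbig_seq ?boxs_uniq // sumEFin.
Qed.
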